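(* Assume (A1)–(A2) and $N\geq \max\{1,\|f\|_\infty/2\}$, and let $v_n^h$ ($n\ge0$) be the functions produced by the semi-discrete policy iteration described in the context. Then for all $n\geq 0$, $v_{n+1}^h\leq v_n^h$ in $[0,T]\times\mathbb{R}^d$.
   Context: Let $d,m\ge1$, $T\ge 1$, $A\subset\mathbb{R}^m$ compact, $c:[0,T]\times\mathbb{R}^d\times A\to\mathbb{R}$, $f:[0,T]\times\mathbb{R}^d\times A\to\mathbb{R}^d$, $q:\mathbb{R}^d\to\mathbb{R}$. Let $\alpha(t,x,p)=\operatorname{argmin}_{a\in A}[c(t,x,a)+p\cdot f(t,x,a)]$, assumed to be the unique minimizer. Assumptions: (A1) $c,f,q$ are uniformly bounded and Lipschitz continuous in all their variables; (A2) $\alpha(\cdot,\cdot,\cdot)$ and a given continuous initial policy $\alpha_0:\mathbb{R}\times\mathbb{R}^d\to A$ are uniformly Lipschitz continuous in all their variables. For $\varphi:\mathbb{R}^d\to\mathbb{R}$, $h\in(0,1)$: $\nabla^h\varphi(x)=\big(\frac{\varphi(x+he_i)-\varphi(x-he_i)}{2h}\big)_{i=1}^d$, $\Delta^h\varphi(x)=\sum_{i=1}^d\frac{\varphi(x+he_i)-2\varphi(x)+\varphi(x-he_i)}{h^2}$ (acting in $x$). Semi-discrete policy iteration: for $n=0,1,\dots$, $v_n^h$ is the bounded Lipschitz solution of $\partial_t v_n^h+c(t,x,\alpha_n(t,x))+\nabla^h v_n^h\cdot f(t,x,\alpha_n(t,x))=-Nh\Delta^h v_n^h$ in $(0,T)\times\mathbb{R}^d$,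 $v_n^h(T,x)=q(x)$, and then $\alpha_{n+1}(t,x)=\alpha(t,x,\nabla^h v_n^h(t,x))$. *)

(* Defs.v *)
From HB Require Import structures.
From mathcomp Require Import all_boot all_order all_algebra.
From mathcomp Require Import all_classical all_reals all_analysis.
Set Implicit Arguments. Unset Strict Implicit. Unset Printing Implicit Defensive.
Import Order.TTheory GRing.Theory Num.Theory.
Import numFieldNormedType.Exports.
Local Open Scope classical_set_scope.
Local Open Scope ring_scope.

Section Defs.
Variable R : realType.

Definition evec (d : nat) (i : 'I_d) : 'rV[R]_d := delta_mx 0 i.

Definition dotv (d : nat) (p q : 'rV[R]_d) : R := \sum_(i < d) p 0 i * q 0 i.

Definition dgrad (d : nat) (h : R) (phi : 'rV[R]_d -> R) (x : 'rV[R]_d)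
  : 'rV[R]_d :=
  \row_(i < d) ((phi (x + h *: evec i) - phi (x - h *: evec i)) / (2 * h)).

Definition dlap (d : nat) (h : R) (phi : 'rV[R]_d -> R) (x : 'rV[R]_d) : R :=
  \sum_(i < d)
    ((phi (x + h *: evec i) - 2 * phi x + phi (x - h *: evec i)) / (h ^+ 2)).

Definition lipschitz3 (V : normedModType R) (d m : nat)
  (D : R -> 'rV[R]_d -> 'rV[R]_m -> Prop)
  (g : R -> 'rV[R]_d -> 'rV[R]_m -> V) : Prop :=
  exists L : R, forall t x a t' x' a', D t x a -> D t' x' a' ->
    `|g t x a - g t' x' a'| <= L * (`|t - t'| + `|x - x'| + `|a - a'|).

Definition lipschitz2 (V : normedModType R) (d : nat)
  (D : R -> 'rV[R]_d -> Prop) (g : R -> 'rV[R]_d -> V) : Prop :=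
  exists L : R, forall t x t' x', D t x -> D t' x' ->
    `|g t x - g t' x'| <= L * (`|t - t'| + `|x - x'|).

Definition lipschitz1 (V : normedModType R) (d : nat)
  (g : 'rV[R]_d -> V) : Prop :=
  exists L : R, forall x x', `|g x - g x'| <= L * `|x - x'|.

Definition bounded3 (V : normedModType R) (d m : nat)
  (D : R -> 'rV[R]_d -> 'rV[R]_m -> Prop)
  (g : R -> 'rV[R]_d -> 'rV[R]_m -> V) : Prop :=
  exists M : R, forall t x a, D t x a -> `|g t x a| <= M.

Definition bounded2 (V : normedModType R) (d : nat)
  (D : R -> 'rV[R]_d -> Prop) (g : R -> 'rV[R]_d -> V) : Prop :=
  exists M : R, forall t x, D t x -> `|g t x| <= M.

End Defs.

(* Main.v *)
Require Import Defs.
From HB Require Import structures.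
From mathcomp Require Import all_boot all_order all_algebra.
From mathcomp Require Import all_classical all_reals all_analysis.
From mathcomp Require Import ring lra.
Import Order.TTheory GRing.Theory Num.Theory.
Import numFieldNormedType.Exports.
Local Open Scope classical_set_scope.
Local Open Scope ring_scope.

Lemma lip_within (R : realType) (g : R -> R) (a b L : R) : 0 <= L ->
  (forall s s', a <= s <= b -> a <= s' <= b -> `|g s - g s'| <= L * `|s - s'|) ->
  {within `[a, b], continuous g}.
Proof.
move=> L0 Hg; apply/subspace_continuousP => x Ax.
apply/cvgrPdist_le => e e0.
have Lp : 0 < L + 1 by lra.
have Hx : a <= x <= b by move: Ax; rewrite /= in_itv.
suff : \forall y \near x, [set` `[a, b]] y -> `|g x - g y| <= e by [].
apply/nbhs_normP; exists (e / (L+1)); first by rewrite /= divr_gt0.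
move=> y /= /ltW H Ay.
have Hy : a <= y <= b by move: Ay; rewrite /= in_itv.
apply: (le_trans (Hg _ _ Hx Hy)).
apply: (le_trans (ler_wpM2l L0 H)).
rewrite mulrA ler_pdivrMr //. have := ltW e0. nra.
Qed.

Lemma step (R : realType) (d : nat) (w : R -> 'rV[R]_d -> R) (s0 s1 K L ak : R) :
  s0 < s1 -> 0 <= K -> 0 <= L -> (s1 - s0) * K <= 1 ->
  (forall y, w s1 y <= ak) ->
  (forall y s, s0 <= s <= s1 -> `|w s y - w s1 y| <= L * (s1 - s0)) ->
  (forall x, {within `[s0, s1], continuous (fun s => w s x)}) ->
  (forall x s, s0 < s < s1 -> derivable (fun s => w s x) s 1 /\
      forall E, (forall y, w s y - w s x <= E) ->
        - (K * E) <= 'D_1 (fun s => w s x) s) ->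
  forall x, w s0 x <= ak + 2 * K * L * (s1 - s0) ^+ 2.
Proof.
move=> lt01 K0 L0 dK Hak Hlip Hc Hd x.
have [xi xiin Hm] := @MVT R (fun s => w s x) (fun s => 'D_1 (fun s => w s x) s) s0 s1 lt01
  (fun s sin => derivableP (Hd x s (ltac:(by move: sin; rewrite in_itv))).1) (Hc x).
have xi1 : s0 < xi < s1 by move: xiin; rewrite in_itv.
have [_ HD] := Hd x xi xi1.
set D := 'D_1 _ xi in Hm HD.
have xile : s0 <= xi <= s1 by case/andP: xi1 => /ltW -> /ltW ->.
have := HD (ak - w s1 x + 2 * L * (s1 - s0)).
move=> /(_ _)/wrap[]. 
  move=> y.
  have := Hlip y xi xile; have := Hlip x xi xile; have := Hak y.
  rewrite !ler_norml; lra.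
move=> HD'.
have Hx := Hak x.
set dl := s1 - s0 in Hm HD' dK *.
have dl0 : 0 < dl by rewrite /dl subr_gt0.
rewrite expr2.
nra.
Qed.

Lemma iter_bound (R : realType) (d : nat) (w : R -> 'rV[R]_d -> R) (t T K L : R) (n : nat) :
  t < T -> (0 < n)%N -> 0 <= K -> 0 <= L -> (T - t) / n%:R * K <= 1 ->
  (forall y, w T y <= 0) ->
  (forall y s s', t <= s <= T -> t <= s' <= T -> `|w s y - w s' y| <= L * `|s - s'|) ->
  (forall x s, t < s < T -> derivable (fun s => w s x) s 1 /\
      forall E, (forall y, w s y - w s x <= E) ->
        - (K * E) <= 'D_1 (fun s => w s x) s) ->
  forall x, w t x <= n%:R * (2 * K * L * ((T - t) / n%:R) ^+ 2).
Proof.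
move=> ltT n0 K0 L0 dK HT Hlip Hd.
set dl := (T - t) / n%:R in dK *.
have nR : 0 < n%:R :> R by rewrite ltr0n.
have dl0 : 0 < dl by rewrite /dl divr_gt0 // subr_gt0.
have ndl : n%:R * dl = T - t by rewrite /dl mulrC divfK // gt_eqF.
suff H : forall k, (k <= n)%N -> forall x, w (T - k%:R * dl) x <= k%:R * (2 * K * L * dl ^+ 2).
  by move=> x; have := H n (leqnn n) x; rewrite ndl opprB addrC subrK.
elim=> [|k IH] kn x.
  by rewrite !mul0r subr0 HT.
have kn' : (k <= n)%N by apply: ltnW.
have knR : k.+1%:R <= n%:R :> R by rewrite ler_nat.
have kR : 0 <= k%:R :> R by [].
have step1 := @step R d w (T - k.+1%:R * dl) (T - k%:R * dl) K L (k%:R * (2 * K * L * dl ^+ 2)).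
have e1 : T - k%:R * dl - (T - k.+1%:R * dl) = dl by rewrite -natr1; ring.
rewrite e1 in step1.
have rng : forall s, T - k.+1%:R * dl <= s <= T - k%:R * dl -> t <= s <= T.
  move=> s /andP[h1 h2]; apply/andP; split.
    apply: le_trans h1; rewrite -natr1; rewrite -natr1 in knR; nra.
  apply: (le_trans h2); nra.
have := step1 _ K0 L0 _ (IH kn') _ _ _ x.
rewrite -natr1 in knR.
have -> : k.+1%:R * (2 * K * L * dl ^+ 2) = k%:R * (2 * K * L * dl ^+ 2) + 2 * K * L * dl ^+ 2 by rewrite -natr1; ring.
apply.
- rewrite -natr1; nra.
- by [].
- move=> y s hs.
  have hk : T - k.+1%:R * dl <= T - k%:R * dl <= T - k%:R * dl by rewrite lexx andbT -natr1; nra.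
  have h := Hlip y s _ (rng _ hs) (rng _ hk). apply: (le_trans h); rewrite ler_wpM2l //.
  case/andP: hs => h1 h2; rewrite -natr1 in h1; rewrite ler0_norm ?subr_le0 //; nra.
- move=> y; apply: lip_within L0 _ => s s' hs hs'; exact: Hlip (rng _ hs) (rng _ hs').
- move=> y s /andP[h1 h2]; apply: Hd; apply/andP; split.
    apply: le_lt_trans h1; rewrite -natr1; nra.
  apply: (lt_le_trans h2); nra.
Qed.

Lemma entry_le (R : realType) d (M : 'rV[R]_d) i : `|M 0 i| <= `|M|.
Proof.
have -> : `|M| = mx_norm M by [].
rewrite mx_normE.
rewrite -[leLHS]nngE num_le. 
apply: (le_trans _ (le_bigmax _ _ (0, i))). rewrite /=. exact: lexx.
Qed.
Lemma term_bound (R : realType) (N h fi wp w wm E : R) : 0 < h -> `|fi| <= 2 * N ->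
  wp - w <= E -> wm - w <= E ->
  N * h * ((wp - 2 * w + wm) / h ^+ 2) + (wp - wm) / (2 * h) * fi <= 2 * N / h * E.
Proof.
move=> h0 hf h1 h2.
have -> : N * h * ((wp - 2 * w + wm) / h ^+ 2) + (wp - wm) / (2 * h) * fi
  = ((2 * N + fi) * (wp - w) + (2 * N - fi) * (wm - w)) / (2 * h).
  by field; rewrite gt_eqF.
have -> : 2 * N / h * E = ((2 * N + fi) * E + (2 * N - fi) * E) / (2 * h).
  by field; rewrite gt_eqF.
rewrite ler_pM2r ?invr_gt0 ?mulr_gt0 //.
move: hf; rewrite ler_norml => /andP[f1 f2].
apply: lerD; apply: ler_wpM2l => //; lra.
Qed.

Theorem proposition2p3 (R : realType) (d m : nat) (T h N : R)
  (A : set 'rV[R]_m)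
  (c : R -> 'rV[R]_d -> 'rV[R]_m -> R)
  (f : R -> 'rV[R]_d -> 'rV[R]_m -> 'rV[R]_d)
  (q : 'rV[R]_d -> R)
  (alpha : R -> 'rV[R]_d -> 'rV[R]_d -> 'rV[R]_m)
  (pol : nat -> R -> 'rV[R]_d -> 'rV[R]_m)
  (v : nat -> R -> 'rV[R]_d -> R) :
  (1 <= d)%N -> (1 <= m)%N -> 1 <= T -> 0 < h < 1 ->
  compact A ->
  (* alpha(t,x,p) is the unique minimizer over A of c + p . f *)
  (forall t x p, 0 <= t <= T ->
     A (alpha t x p) /\
     forall a, A a ->
       c t x (alpha t x p) + dotv p (f t x (alpha t x p))
         <= c t x a + dotv p (f t x a) /\
       (c t x a + dotv p (f t x a)
          <= c t x (alpha t x p) + dotv p (f t x (alpha t x p)) ->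
        a = alpha t x p)) ->
  (* (A1) *)
  bounded3 (fun t _ a => 0 <= t <= T /\ A a) c ->
  bounded3 (fun t _ a => 0 <= t <= T /\ A a) f ->
  (exists M : R, forall x, `|q x| <= M) ->
  lipschitz3 (fun t _ a => 0 <= t <= T /\ A a) c ->
  lipschitz3 (fun t _ a => 0 <= t <= T /\ A a) f ->
  lipschitz1 q ->
  (* (A2) *)
  lipschitz3 (fun t _ _ => 0 <= t <= T) alpha ->
  (forall t x, A (pol 0%N t x)) ->
  (forall t, continuous (fun x => pol 0%N t x)) ->
  lipschitz2 (fun _ _ => True) (pol 0%N) ->
  (* N >= max{1, ||f||_oo / 2} *)
  1 <= N ->
  (forall t x a, 0 <= t <= T -> A a -> `|f t x a| / 2 <= N) ->
  (* semi-discrete policy iteration *)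
  (forall n : nat,
     bounded2 (fun t _ => 0 <= t <= T) (v n) /\
     lipschitz2 (fun t _ => 0 <= t <= T) (v n) /\
     (forall x, v n T x = q x) /\
     (forall t x, 0 < t < T ->
        derivable (fun s => v n s x) t 1 /\
        'D_1 (fun s => v n s x) t + c t x (pol n t x)
          + dotv (dgrad h (v n t) x) (f t x (pol n t x))
        = - (N * h * dlap h (v n t) x)) /\
     (forall t x, 0 <= t <= T ->
        pol n.+1 t x = alpha t x (dgrad h (v n t) x))) ->
  forall (n : nat) (t : R) (x : 'rV[R]_d), 0 <= t <= T ->
    v n.+1 t x <= v n t x.
Proof.
move=> d1 m1 T1 /andP[h0 h1] cA Halpha _ _ _ _ _ _ _ HA0 _ _ N1 Hf Hpi n t x /andP[t0 tT].
have [_ [[L0 HL0] [HT0 [Hode0 Hpol0]]]] := Hpi n.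
have [_ [[L1 HL1] [HT1 [Hode1 Hpol1]]]] := Hpi n.+1.
have inA : forall k s y, 0 <= s <= T -> A (pol k s y).
  case=> [|k] s y hs; first exact: HA0.
  have [_ [_ [_ [_ Hp]]]] := Hpi k.
  by rewrite Hp //; exact: (Halpha _ _ _ hs).1.
pose w := fun s y => v n.+1 s y - v n s y.
suff : w t x <= 0 by rewrite /w subr_le0.
pose L := `|L0| + `|L1|.
pose K := d%:R * (2 * N / h).
have K0 : 0 <= K by rewrite /K mulr_ge0 // divr_ge0 //; lra.
have L0' : 0 <= L by rewrite /L addr_ge0.
have Hlip : forall y s s', 0 <= s <= T -> 0 <= s' <= T ->
    `|w s y - w s' y| <= L * `|s - s'|.
  move=> y s s' hs hs'.
  have a := HL0 s y s' y hs hs'; have b := HL1 s y s' y hs hs'.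
  rewrite subrr normr0 addr0 in a b.
  have -> : w s y - w s' y = (v n.+1 s y - v n.+1 s' y) - (v n s y - v n s' y)
    by rewrite /w; ring.
  apply: (le_trans (ler_normB _ _)); rewrite /L mulrDl addrC.
  apply: lerD.
    apply: (le_trans a); apply: ler_wpM2r => //; exact: ler_norm.
  apply: (le_trans b); apply: ler_wpM2r => //; exact: ler_norm.
have HwT : forall y, w T y <= 0 by move=> y; rewrite /w HT0 HT1 subrr.
case: (ltP t T) => tT'; last first.
  by have -> : t = T by apply/eqP; rewrite eq_le tT tT'.
have Hd : forall x0 s, t < s < T -> derivable (fun s => w s x0) s 1 /\
      forall E, (forall y, w s y - w s x0 <= E) ->
        - (K * E) <= 'D_1 (fun s => w s x0) s.
  move=> x0 s /andP[ts sT].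
  have s0 : 0 < s < T by apply/andP; split => //; exact: le_lt_trans ts.
  have hs : 0 <= s <= T by case/andP: s0 => /ltW -> /ltW ->.
  have [dv0 e0] := Hode0 s x0 s0.
  have [dv1 e1] := Hode1 s x0 s0.
  have -> : (fun s => w s x0) = (fun s => v n.+1 s x0) - (fun s => v n s x0) by [].
  split; first exact: derivableB.
  move=> E HE.
  rewrite deriveB //.
  set a := pol n.+1 s x0 in e1 *.
  set b := pol n s x0 in e0 *.
  set p := dgrad h (v n s) x0 in e0 *.
  have hmin := ((Halpha s x0 p hs).2 b (inA n s x0 hs)).1.
  rewrite -/p -(Hpol0 s x0 hs) -/a in hmin.
  have Hsum : N * h * dlap h (v n.+1 s) x0 - N * h * dlap h (v n s) x0
      + dotv (dgrad h (v n.+1 s) x0) (f s x0 a) - dotv p (f s x0 a)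
    = \sum_(i < d) (N * h * ((w s (x0 + h *: evec R i) - 2 * w s x0 + w s (x0 - h *: evec R i)) / h ^+ 2)
        + (w s (x0 + h *: evec R i) - w s (x0 - h *: evec R i)) / (2 * h) * f s x0 a 0 i).
    rewrite /dlap /dotv /p !mulr_sumr -sumrB -big_split -sumrB /=.
    apply: eq_bigr => i _; rewrite !mxE /w.
    by field; rewrite ?gt_eqF // mulr_gt0.
  have Hle : \sum_(i < d) (N * h * ((w s (x0 + h *: evec R i) - 2 * w s x0 + w s (x0 - h *: evec R i)) / h ^+ 2)
        + (w s (x0 + h *: evec R i) - w s (x0 - h *: evec R i)) / (2 * h) * f s x0 a 0 i) <= K * E.
    apply: (@le_trans _ _ (\sum_(i < d) (2 * N / h * E))).
      apply: ler_sum => i _; apply: term_bound => //.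
      have := Hf s x0 a hs (inA n.+1 s x0 hs).
      have := @entry_le R d (f s x0 a) i.
      lra.
    have e : forall z : R, z *+ d = d%:R * z by move=> z; rewrite mulr_natl.
    by rewrite sumr_const card_ord e /K mulrA.
  lra.
have tau0 : 0 < T - t by rewrite subr_gt0.
rewrite leNgt; apply/negP => wpos.
pose C := 2 * K * L * (T - t) ^+ 2.
pose M := Num.max (K * (T - t)) (C / w t x).
pose n' := (Num.trunc M).+1.
have hM : M < n'%:R by exact: truncnS_gt.
have nR : 0 < n'%:R :> R by rewrite ltr0n.
have hK : K * (T - t) < n'%:R by apply: le_lt_trans hM; rewrite /M le_max lexx.
have hC : C / w t x < n'%:R by apply: le_lt_trans hM; rewrite /M le_max lexx orbT.
have := @iter_bound R d w t T K L n' tT' (ltn0Sn _) K0 L0' _ HwT _ Hd x.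
have hdK : (T - t) / n'%:R * K <= 1.
  rewrite mulrAC ler_pdivrMr // mul1r mulrC; exact: ltW.
have Hlip' : forall y s s', t <= s <= T -> t <= s' <= T -> `|w s y - w s' y| <= L * `|s - s'|.
  move=> y s s' /andP[a1 a2] /andP[b1 b2]; apply: Hlip; apply/andP; split => //; lra.
have Hb := @iter_bound R d w t T K L n' tT' (ltn0Sn _) K0 L0' hdK HwT Hlip' Hd x.
have eq : n'%:R * (2 * K * L * ((T - t) / n'%:R) ^+ 2) = C / n'%:R.
  by rewrite /C; field; rewrite gt_eqF.
rewrite eq in Hb.
have : C / n'%:R < w t x.
  rewrite ltr_pdivrMr // mulrC -ltr_pdivrMr //.
move=> H; have := le_lt_trans Hb H; by rewrite ltxx.
Qed.
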